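(* Every regular element $\gamma\in\mathfrak{t}(F)$ is conjugate under the Weyl group $W=\mathfrak{S}_d$ to at least one element in minimal form.
   Context: $F=k((\epsilon))$ with $\mathrm{val}(\epsilon)=1$; $G=\mathrm{GL}_d$, $T$ the diagonal torus, $\mathfrak{t}$ its Lie algebra; $W=\mathfrak{S}_d$ acts by permuting diagonal entries. For $\gamma=\mathrm{diag}(\gamma_1,\dots,\gamma_d)$, $\alpha_{i,j}(\gamma)=\gamma_i-\gamma_j$ and $\alpha_l=\alpha_{l,l+1}$. A regular $\gamma\in\mathfrak{t}(F)$ is in minimal form if $\mathrm{val}(\alpha_{i,j}(\gamma))=\min_{i\le l\le j-1}\mathrm{val}(\alpha_l(\gamma))$ for all $1\le i<j\le d$. *)

(* Defs.v *)
From HB Require Import structures.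
From mathcomp Require Import all_boot all_order all_algebra all_fingroup.
From Stdlib Require Import ClassicalEpsilon.
Set Implicit Arguments. Unset Strict Implicit. Unset Printing Implicit Defensive.
Import Order.TTheory GRing.Theory Num.Theory.
Local Open Scope ring_scope.

(* F = k((eps)): formal Laurent series over a field k, represented by their
   coefficient functions int -> k with support bounded below.
   The coefficient of eps^n of x is (val x) n. *)
Definition laurent (k : fieldType) :=
  {f : int -> k | exists N : int, forall n : int, n < N -> f n = 0}.

Definition lsub (k : fieldType) (x y : laurent k) : laurent k.
Proof.
exists (fun n => proj1_sig x n - proj1_sig y n).
case: (proj2_sig x) => N1 H1; case: (proj2_sig y) => N2 H2.
exists (Num.min N1 N2) => n; rewrite lt_min => /andP[h1 h2].
by rewrite H1 // H2 // subr0.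
Defined.

(* the eps-adic valuation, with values in int extended by +oo (= None):
   val x = Some n iff n is the least index with nonzero coefficient;
   val 0 = None (= +oo). *)
Definition is_val (k : fieldType) (x : laurent k) (v : option int) : Prop :=
  match v with
  | None => forall n, proj1_sig x n = 0
  | Some n => proj1_sig x n != 0 /\ forall m, m < n -> proj1_sig x m = 0
  end.

Definition lval (k : fieldType) (x : laurent k) : option int :=
  epsilon (inhabits None) (is_val x).

Definition omin (a b : option int) : option int :=
  match a, b with
  | None, _ => b
  | _, None => a
  | Some m, Some n => Some (Num.min m n)
  end.

(* an element gamma = diag(gamma_0, ..., gamma_{d-1}) of t(F) (0-indexed) *)
Definition alpha (k : fieldType) (d : nat) (g : 'I_d -> laurent k) (i j : 'I_d) :=
  lsub (g i) (g j).

(* regular: all roots alpha_{i,j}(g) = g_i - g_j, i <> j, are nonzero,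
   i.e. the diagonal entries are pairwise distinct *)
Definition regular (k : fieldType) (d : nat) (g : 'I_d -> laurent k) : Prop :=
  forall i j : 'I_d, i != j -> g i <> g j.

Definition alpha_simple (k : fieldType) (d : nat) (g : 'I_d -> laurent k)
  (l : nat) : option int :=
  match insub l, insub l.+1 with
  | Some i, Some j => lval (@alpha k d g i j)
  | _, _ => None
  end.

Definition minimal_form (k : fieldType) (d : nat) (g : 'I_d -> laurent k) : Prop :=
  forall i j : 'I_d, (i < j)%N ->
    lval (alpha g i j) = \big[omin/None]_(i <= l < j) alpha_simple g l.

Definition weyl_act (k : fieldType) (d : nat) (w : {perm 'I_d})
  (g : 'I_d -> laurent k) : 'I_d -> laurent k := fun i => g (w i).

(* Main.v *)
Require Import Defs.
From mathcomp Require Import all_boot all_order all_algebra all_fingroup.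
From mathcomp Require Import zify.
From Stdlib Require Import ClassicalEpsilon FunctionalExtensionality ProofIrrelevance Classical.
Set Implicit Arguments. Unset Strict Implicit. Unset Printing Implicit Defensive.
Import Order.TTheory GRing.Theory Num.Theory.
Local Open Scope ring_scope.

Lemma least_nz (k : fieldType) (f : int -> k) (N : int) :
  (forall n, n < N -> f n = 0) -> forall m, f m != 0 ->
  exists n, f n != 0 /\ forall m, m < n -> f m = 0.
Proof.
move=> H m hm.
have hNm : N <= m by rewrite leNgt; apply/negP => /H; apply/eqP.
have [j hj] : exists j : nat, m = N + j%:Z.
  by exists `|m - N|%N; lia.
have ex : exists j : nat, f (N + j%:Z) != 0 by exists j; rewrite -hj.
case: (ex_minnP ex) => j0 Pj0 Hmin.
exists (N + j0%:Z); split => // m' hm'.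
case: (ltP m' N) => [/H //|hN].
have [j' hj'] : exists j' : nat, m' = N + j'%:Z.
  by exists `|m' - N|%N; lia.
subst m'.
have hlt : (j' < j0)%N by move: hm'; rewrite ltrD2l ltz_nat.
apply/eqP; apply: contraTT hlt => hne; rewrite -leqNgt; exact: Hmin.
Qed.

Lemma val_exists (k : fieldType) (x : laurent k) : exists v, is_val x v.
Proof.
case: (classic (forall n, proj1_sig x n = 0)) => H.
  by exists None.
have [m hm] : exists m, proj1_sig x m != 0.
  apply: NNPP => H2; apply: H => n; apply: NNPP => H3; apply: H2; exists n; exact/eqP.
case: (proj2_sig x) => N HN.
case: (least_nz HN hm) => n [h1 h2]; by exists (Some n).
Qed.

Lemma is_val_lval (k : fieldType) (x : laurent k) : is_val x (lval x).
Proof. rewrite /lval; apply: epsilon_spec; exact: val_exists. Qed.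

Lemma is_val_uniq (k : fieldType) (x : laurent k) v1 v2 :
  is_val x v1 -> is_val x v2 -> v1 = v2.
Proof.
case: v1 => [n1|]; case: v2 => [n2|] //=.
- move=> [h1 h1'] [h2 h2']; case: (ltgtP n1 n2) => [/h2' | /h1' | -> //].
  + by move/eqP: h1.
  + by move/eqP: h2.
- by move=> [h1 _] H; move: h1; rewrite H eqxx.
- by move=> H [h1 _]; move: h1; rewrite H eqxx.
Qed.

Lemma lval_eq (k : fieldType) (x : laurent k) v : is_val x v -> lval x = v.
Proof. move=> H; apply: is_val_uniq (is_val_lval x) H. Qed.

Definition ole (n : int) (o : option int) : Prop :=
  match o with None => True | Some m => n <= m end.

Lemma big_omin_ole n (r : seq nat) (F : nat -> option int) :
  (forall l, l \in r -> ole n (F l)) -> ole n (\big[omin/None]_(l <- r) F l).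
Proof.
elim: r => [|x r IH] H; first by rewrite big_nil.
rewrite big_cons.
have := H x (mem_head _ _).
have := IH (fun l hl => H l (mem_behead (s:=x::r) hl)).
case: (F x) => [a|]; case: (\big[omin/None]_(l <- r) F l) => [b|] //=.
by move=> hb ha; rewrite le_min ha hb.
Qed.

Lemma big_omin n (r : seq nat) (F : nat -> option int) :
  (forall l, l \in r -> ole n (F l)) -> (exists2 l, l \in r & F l = Some n) ->
  \big[omin/None]_(l <- r) F l = Some n.
Proof.
elim: r => [|x r IH] H [l hl hF]; first by [].
rewrite big_cons.
move: hl; rewrite in_cons => /orP [/eqP el|hl].
  subst l; rewrite hF.
  have := big_omin_ole (fun l hl => H l (mem_behead (s:=x::r) hl)).
  case: (\big[omin/None]_(l <- r) F l) => [b|] //= hb.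
  by rewrite (min_idPl hb).
have -> : \big[omin/None]_(l <- r) F l = Some n.
  apply: IH; last by exists l.
  by move=> l' hl'; apply: H; rewrite in_cons hl' orbT.
have := H x (mem_head _ _).
case: (F x) => [a|] //= ha; by rewrite (min_idPr ha).
Qed.

Lemma chain (k : fieldType) (f : nat -> k) i j : (i <= j)%N -> f i != f j ->
  exists l, (i <= l < j)%N /\ f l != f l.+1.
Proof.
elim: j => [|j IH]; first by rewrite leqn0 => /eqP ->; rewrite eqxx.
rewrite leq_eqVlt => /orP [/eqP -> | hij]; first by rewrite eqxx.
move=> hne.
case: (eqVneq (f j) (f j.+1)) => [e|ne].
  have hne' : f i != f j by rewrite e.
  have [l [hl hf]] := IH hij hne'.
  by exists l; split => //; move: hl => /andP [-> /= /leqW].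
by exists j; split => //; rewrite leqnn andbT -ltnS.
Qed.

Definition cf (k : fieldType) (d : nat) (g : 'I_d -> laurent k) (a : 'I_d) (n : int) : k :=
  proj1_sig (g a) n.

Definition key (k : fieldType) (d : nat) (g : 'I_d -> laurent k) (n : int) (a : 'I_d) : nat :=
  find (fun t => cf g t n == cf g a n) (enum 'I_d).

Lemma key_inj (k : fieldType) (d : nat) (g : 'I_d -> laurent k) n a b :
  key g n a = key g n b -> cf g a n = cf g b n.
Proof.
move=> e.
have ha : has (fun t => cf g t n == cf g a n) (enum 'I_d).
  by apply/hasP; exists a; rewrite ?mem_enum.
have hb : has (fun t => cf g t n == cf g b n) (enum 'I_d).
  by apply/hasP; exists b; rewrite ?mem_enum.
have := nth_find a ha; have := nth_find a hb.
rewrite /key in e; rewrite e /=. move=> eb ea. move/eqP: eb => eb. move/eqP: ea => ea. exact: (etrans (esym ea) eb).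
Qed.

Definition agree (k : fieldType) (d : nat) (g : 'I_d -> laurent k) a b (n : int) :=
  forall m, m < n -> cf g a m = cf g b m.

Definition lexlt (k : fieldType) (d : nat) (g : 'I_d -> laurent k) a b :=
  exists n, agree g a b n /\ (key g n a < key g n b)%N.

Lemma key_neq (k : fieldType) (d : nat) (g : 'I_d -> laurent k) n a b :
  (key g n a < key g n b)%N -> cf g a n != cf g b n.
Proof. by move=> h; apply/eqP => e; move: h; rewrite /key e ltnn. Qed.

Lemma key_eq (k : fieldType) (d : nat) (g : 'I_d -> laurent k) n a b :
  cf g a n = cf g b n -> key g n a = key g n b.
Proof. by rewrite /key => ->. Qed.

Lemma ltP_irr (k : fieldType) (d : nat) (g : 'I_d -> laurent k) a : ~ lexlt g a a.
Proof. by case=> n [_]; rewrite ltnn. Qed.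

Lemma ltP_trans (k : fieldType) (d : nat) (g : 'I_d -> laurent k) a b c :
  lexlt g a b -> lexlt g b c -> lexlt g a c.
Proof.
move=> [p [hp kp]] [q [hq kq]].
case: (ltgtP p q) => [pq|qp|epq].
- exists p; split.
    by move=> m hm; rewrite hp // hq // (lt_trans hm pq).
  by rewrite (key_eq (n:=p) (hq p pq)) in kp.
- exists q; split.
    by move=> m hm; rewrite hp ?(lt_trans hm qp) // hq.
  by rewrite -(key_eq (n:=q) (hp q qp)) in kq.
- subst q; exists p; split; first by move=> m hm; rewrite hp // hq.
  exact: ltn_trans kp kq.
Qed.

Lemma ltP_sandwich (k : fieldType) (d : nat) (g : 'I_d -> laurent k) a b c n :
  lexlt g a b -> lexlt g b c -> agree g a c n -> agree g a b n.
Proof.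
move=> [p [hp kp]] [q [hq kq]] hn.
case: (ltP p n) => [pn|np]; last first.
  by move=> m hm; apply: hp; exact: lt_le_trans hm np.
exfalso.
have eac := hn p pn.
case: (ltgtP p q) => [pq|qp|epq].
- by move/eqP: (key_neq kp); rewrite eac hq.
- by move/eqP: (key_neq kq); rewrite -(hp q qp) hn // (lt_trans qp pn).
- subst q; have := ltn_trans kp kq; by rewrite (key_eq eac) ltnn.
Qed.

Lemma first_diff (k : fieldType) (d : nat) (g : 'I_d -> laurent k) a b :
  g a <> g b -> exists n, agree g a b n /\ cf g a n != cf g b n /\
     lval (lsub (g a) (g b)) = Some n.
Proof.
move=> hne.
have := is_val_lval (lsub (g a) (g b)).
case E: (lval (lsub (g a) (g b))) => [n|] /=.
  move=> [h1 h2]; exists n; split; last split => //.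
    by move=> m hm; apply/eqP; rewrite -subr_eq0; apply/eqP; exact: h2.
  by rewrite -subr_eq0.
move=> H; exfalso; apply: hne.
apply: eq_sig_hprop; first by move=> x p0 q0; apply: proof_irrelevance.
apply: functional_extensionality => n; apply/eqP; rewrite -subr_eq0; apply/eqP; exact: H.
Qed.

Lemma ltP_total (k : fieldType) (d : nat) (g : 'I_d -> laurent k) a b :
  g a <> g b -> lexlt g a b \/ lexlt g b a.
Proof.
move=> /first_diff [n [hn [hd _]]].
case: (ltngtP (key g n a) (key g n b)) => h.
- by left; exists n.
- by right; exists n; split => // m hm; rewrite hn.
- by move/eqP: hd; rewrite (key_inj h).
Qed.

Definition ltb (k : fieldType) (d : nat) (g : 'I_d -> laurent k) a b : bool :=
  if excluded_middle_informative (lexlt g a b) then true else false.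

Lemma ltbP (k : fieldType) (d : nat) (g : 'I_d -> laurent k) a b :
  ltb g a b <-> lexlt g a b.
Proof. by rewrite /ltb; case: excluded_middle_informative. Qed.

Definition rk (k : fieldType) (d : nat) (g : 'I_d -> laurent k) a : nat :=
  #|[set b | ltb g b a]|.

Lemma rk_lt (k : fieldType) (d : nat) (g : 'I_d -> laurent k) a : (rk g a < d)%N.
Proof.
rewrite /rk -[X in (_ < X)%N]card_ord -cardsT; apply: proper_card.
rewrite properT; apply/eqP => H.
have : a \in [set b | ltb g b a] by rewrite H inE.
by rewrite inE => /ltbP /ltP_irr.
Qed.

Lemma rk_mono (k : fieldType) (d : nat) (g : 'I_d -> laurent k) a b :
  lexlt g a b -> (rk g a < rk g b)%N.
Proof.
move=> hab; apply: proper_card; apply/properP; split.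
  apply/subsetP => x; rewrite !inE => /ltbP hxa; apply/ltbP.
  exact: ltP_trans hxa hab.
exists a; rewrite !inE; first exact/ltbP.
by apply/negP => /ltbP /ltP_irr.
Qed.

Definition rko (k : fieldType) (d : nat) (g : 'I_d -> laurent k) a : 'I_d :=
  Ordinal (rk_lt g a).

Lemma rko_inj (k : fieldType) (d : nat) (g : 'I_d -> laurent k) :
  regular g -> injective (rko g).
Proof.
move=> reg a b e; apply/eqP; apply/negP => /negP hab.
have e' : rk g a = rk g b by move: e => /(congr1 val).
case: (ltP_total (reg a b hab)) => /rk_mono; by rewrite e' ltnn.
Qed.

Lemma agree_trans (k : fieldType) (d : nat) (g : 'I_d -> laurent k) a b c n :
  agree g a b n -> agree g a c n -> agree g b c n.
Proof. by move=> h1 h2 m hm; rewrite -h1 // h2. Qed.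

Theorem mainTheorem18 (k : fieldType) (d : nat) (g : 'I_d -> laurent k) :
  regular g -> exists w : {perm 'I_d}, minimal_form (weyl_act w g).
Proof.
move=> reg.
pose p := perm (rko_inj reg).
exists (p^-1)%g.
have hr : forall i, rk g ((p^-1)%g i) = i.
  by move=> i'; have := permKV p i'; rewrite permE => /(congr1 val).
have mono : forall i j : 'I_d, (i < j)%N -> lexlt g ((p^-1)%g i) ((p^-1)%g j).
  move=> i j hij.
  have hne : (p^-1)%g i != (p^-1)%g j.
    apply/negP => /eqP/(congr1 p); rewrite !permKV => e; move: hij; by rewrite e ltnn.
  case: (ltP_total (reg _ _ hne)) => // /rk_mono; rewrite !hr => h.
  by move: (ltn_trans h hij); rewrite ltnn.
move=> i j hij.
set w := (p^-1)%g.
have [n [hn kn]] := mono i j hij.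
have dn := key_neq kn.
have lv : lval (alpha (weyl_act w g) i j) = Some n.
  apply: lval_eq => /=; split; first by rewrite subr_eq0.
  by move=> m hm; apply/eqP; rewrite subr_eq0; apply/eqP; exact: hn.
rewrite lv; symmetry.
pose s l := insubd i l.
have vs : forall l, (l < d)%N -> val (s l) = l by move=> l hl; rewrite val_insubd hl.
have asE : forall l, (l.+1 < d)%N ->
    alpha_simple (weyl_act w g) l = lval (lsub (g (w (s l))) (g (w (s l.+1)))).
  move=> l hl; rewrite /alpha_simple.
  case: insubP => [i0 _ vi0|]; last by rewrite ltnW.
  case: insubP => [j0 _ vj0|]; last by rewrite hl.
  have -> : s l = i0 by apply: val_inj; rewrite vs ?vi0 // ltnW.
  have -> : s l.+1 = j0 by apply: val_inj; rewrite vs ?vj0.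
  by [].
have agr : forall l, (i <= l <= j)%N -> agree g (w i) (w (s l)) n.
  move=> l /andP [il lj].
  case: (ltngtP i l) il => // [il _|eil _]; last first.
    have -> : s l = i by apply: val_inj; rewrite vs -?eil ?ltn_ord.
    by move=> m.
  case: (ltngtP l j) lj => // [lj' _|elj _]; last first.
    have -> : s l = j by apply: val_inj; rewrite vs ?elj ?ltn_ord.
    exact: hn.
  have sl : val (s l) = l by apply: vs; exact: ltn_trans lj' (ltn_ord j).
  apply: (ltP_sandwich (c := w j)) => //.
    by apply: mono; rewrite sl.
  by apply: mono; rewrite sl.
have cons : forall l, (i <= l < j)%N -> exists m, agree g (w (s l)) (w (s l.+1)) m /\
   cf g (w (s l)) m != cf g (w (s l.+1)) m /\
   lval (lsub (g (w (s l))) (g (w (s l.+1)))) = Some m /\ n <= m.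
  move=> l /andP [il lj].
  have hd : (l.+1 < d)%N by exact: leq_ltn_trans lj (ltn_ord j).
  have hne : w (s l) != w (s l.+1).
    apply/negP => /eqP /perm_inj /(congr1 val); rewrite !vs ?(ltnW hd) //.
    by move/eqP; rewrite eqn_leq ltnn andbF.
  have [m [hm1 [hm2 hm3]]] := first_diff (reg _ _ hne).
  exists m; split => //; split => //; split => //.
  rewrite leNgt; apply/negP => hmn; move/eqP: hm2; apply.
  apply: (agree_trans (agr l _) (agr l.+1 _)) => //.
    by rewrite il ltnW.
  by rewrite lj andbT; exact: leqW.
apply: big_omin.
  move=> l; rewrite mem_index_iota => hl.
  have hd : (l.+1 < d)%N by case/andP: hl => _ lj; exact: leq_ltn_trans lj (ltn_ord j).
  rewrite asE //.
  by have [m [_ [_ [-> hm]]]] := cons l hl.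
have si : s i = i by apply: val_inj; rewrite vs ?ltn_ord.
have sj : s j = j by apply: val_inj; rewrite vs ?ltn_ord.
have hij' : (fun l => cf g (w (s l)) n) i != (fun l => cf g (w (s l)) n) j
  by rewrite /= si sj.
have [l [hl hdiff]] := chain (f := fun l => cf g (w (s l)) n) (ltnW hij) hij'.
exists l; first by rewrite mem_index_iota.
have hd : (l.+1 < d)%N by case/andP: hl => _ lj; exact: leq_ltn_trans lj (ltn_ord j).
rewrite asE //.
have [m [hm1 [_ [-> hm]]]] := cons l hl.
congr Some; apply/eqP; rewrite eq_le hm andbT leNgt; apply/negP => hnm.
by move/eqP: hdiff; apply; apply: hm1.
Qed.
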